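(* Let $U\in\mathcal{B}(\ell^2(\mathbb{N}))$ with $\|U\|\le1$. Let $\Omega=\Omega_1\cup\dots\cup\Omega_r$ be an $(\mathbf{N},\mathbf{m})$-multilevel Bernoulli sampling scheme with $1\le N_1<\dots<N_r$, let $M_1<\dots<M_r$, $\mathbf{s}\in\mathbb{N}^r$, $\Delta=\cup_k\Delta_k$ with $\Delta_k\subseteq\{M_{k-1}+1,\dots,M_k\}$, $|\Delta_k|=s_k$, let $q_k=m_k/(N_k-N_{k-1})$, $D=\sum_kq_k^{-1}P_{\Omega_k}$, and let $M\ge M_r$ be an integer. Then for any $t\in(0,1)$ and $\gamma\in(0,1)$, $$\mathbb{P}\Big(\max_{i\in\{1,\dots,M\}\cap\Delta^c}\|P_{\{i\}}U^*DUP_{\{i\}}\|\ge1+t\Big)\le\gamma$$ provided that $$\frac{t^2}{4}\ge\log\Big(\frac{2M}{\gamma}\Big)\cdot\max_{1\le k\le r}\Big\{\Big(\frac{N_k-N_{k-1}}{m_k}-1\Big)\mu_{\mathbf{N},\mathbf{M}}(k,l)\Big\}$$ for all $l=1,\dots,r$ when $M=M_r$, and for all $l\in\{1,\dots,r-1,\infty\}$ when $M>M_r$. In addition, if $m_k=N_k-N_{k-1}$ for each $k$, then $\mathbb{P}(\|P_{\{i\}}U^*DUP_{\{i\}}\|\ge1+t)=0$ for all $i\in\mathbb{N}$.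
   Context: $N_0=M_0=0$. Multilevel Bernoulli scheme: $\Omega_k=\{j\in\{N_{k-1}+1,\dots,N_k\}:\delta_j=1\}$ with independent Bernoulli $\delta_j$, $\mathbb{P}(\delta_j=1)=q_k$. $P^a_b$ projects onto $\mathrm{span}\{e_{a+1},\dots,e_b\}$, $P_\Gamma$ onto $\mathrm{span}\{e_j:j\in\Gamma\}$, $P_K^\perp=I-P_K$. $\mu(A)=\sup|a_{ij}|^2$; $\mu_{\mathbf{N},\mathbf{M}}(k,l)=\sqrt{\mu(P^{N_{k-1}}_{N_k}UP^{M_{l-1}}_{M_l})\mu(P^{N_{k-1}}_{N_k}U)}$ and $\mu_{\mathbf{N},\mathbf{M}}(k,\infty)=\sqrt{\mu(P^{N_{k-1}}_{N_k}UP^\perp_{M_{r-1}})\mu(P^{N_{k-1}}_{N_k}U)}$. *)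

(* Defs.v *)
From mathcomp Require Import all_boot all_algebra.
From mathcomp Require Import complex.
From mathcomp Require Import classical_sets reals exp.
Unset Printing Implicit Defensive.
Import GRing.Theory Num.Theory.
Local Open Scope ring_scope.
Local Open Scope complex_scope.
Local Open Scope ring_scope.

(* Conventions: an operator U on l^2(N) is given by its matrix
   u i j = <e_i, U e_j> with indices i, j >= 1 (index 0 is never used).
   Levels are 1-based: level k (1 <= k <= r) of rows is {N_(k-1)+1,...,N_k}. *)


Definition cabs {R : realType} (z : R[i]) : R := complex.Re `|z|.

(* ||U|| <= 1, expressed on the matrix: for every finitely supported x,
   every finite truncation of ||U x||^2 is at most ||x||^2. *)
Definition contraction {R : realType} (u : nat -> nat -> R[i]) : Prop :=
  forall (n p : nat) (x : nat -> R[i]),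
    \sum_(1 <= i < p.+1) cabs (\sum_(1 <= j < n.+1) u i j * x j) ^+ 2
      <= \sum_(1 <= j < n.+1) cabs (x j) ^+ 2.

(* P^a_b A  (projection onto span{e_(a+1),...,e_b}) on the left *)
Definition Prows {R : realType} (a b : nat) (A : nat -> nat -> R[i]) : nat -> nat -> R[i] :=
  fun i j => if (a < i <= b)%N then A i j else 0.
Definition Pcols {R : realType} (a b : nat) (A : nat -> nat -> R[i]) : nat -> nat -> R[i] :=
  fun i j => if (a < j <= b)%N then A i j else 0.
(* A P^perp_a  (P^perp_a = I - P_a, P_a projection onto span{e_1..e_a}) *)
Definition Pcols_perp {R : realType} (a : nat) (A : nat -> nat -> R[i]) : nat -> nat -> R[i] :=
  fun i j => if (a < j)%N then A i j else 0.

Definition mu {R : realType} (A : nat -> nat -> R[i]) : R :=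
  sup [set x : R | exists i j : nat, (0 < i)%N /\ (0 < j)%N /\ x = cabs (A i j) ^+ 2].

Definition mu_NM {R : realType} (N M : nat -> nat) (u : nat -> nat -> R[i]) (k l : nat) : R :=
  Num.sqrt (mu (Pcols (M l.-1) (M l) (Prows (N k.-1) (N k) u))
            * mu (Prows (N k.-1) (N k) u)).

Definition mu_NM_inf {R : realType} (N M : nat -> nat) (r : nat) (u : nat -> nat -> R[i]) (k : nat) : R :=
  Num.sqrt (mu (Pcols_perp (M r.-1) (Prows (N k.-1) (N k) u))
            * mu (Prows (N k.-1) (N k) u)).

Definition qlev {R : realType} (N m : nat -> nat) (k : nat) : R := (m k)%:R / (N k - N k.-1)%:R.

(* Sample space: outcomes omega : {ffun 'I_(N r) -> bool}, where omega (j-1)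
   is the value of delta_j, for 1 <= j <= N_r (only these delta_j matter). *)
Definition outcome (N : nat -> nat) (r : nat) := {ffun 'I_(N r) -> bool}.

Definition delta (N : nat -> nat) (r : nat) (w : outcome N r) (j : nat) : bool :=
  (0 < j)%N && [exists i : 'I_(N r), (val i == j.-1) && w i].

Definition qidx {R : realType} (N m : nat -> nat) (r j : nat) : R :=
  \sum_(1 <= k < r.+1 | (N k.-1 < j <= N k)%N) @qlev R N m k.

Definition weight {R : realType} (N m : nat -> nat) (r : nat) (w : outcome N r) : R :=
  \prod_(i : 'I_(N r)) (if w i then @qidx R N m r i.+1 else 1 - @qidx R N m r i.+1).

Definition Prob {R : realType} (N m : nat -> nat) (r : nat) (E : pred (outcome N r)) : R :=
  \sum_(w | E w) @weight R N m r w.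

Definition inOmega (N : nat -> nat) (r : nat) (w : outcome N r) (k j : nat) : bool :=
  (N k.-1 < j <= N k)%N && delta N r w j.

(* diagonal entry of D = sum_k q_k^-1 P_(Omega_k) at index j *)
Definition Ddiag {R : realType} (N m : nat -> nat) (r : nat) (w : outcome N r) (j : nat) : R :=
  \sum_(1 <= k < r.+1) (if inOmega N r w k j then (@qlev R N m k)^-1 else 0).

(* || P_{i} U^* D U P_{i} || = | (U^* D U)_{ii} |
   (D vanishes outside {1..N_r}, so the sum over j is finite) *)
Definition UDU_ii {R : realType} (N m : nat -> nat) (r : nat) (u : nat -> nat -> R[i])
    (w : outcome N r) (i : nat) : R :=
  cabs (\sum_(1 <= j < (N r).+1) (u j i)^* * (@Ddiag R N m r w j)%:C * u j i).

(* Main.v *)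
Require Import Defs.
From mathcomp Require Import all_boot all_algebra.
From mathcomp Require Import complex.
From mathcomp Require Import classical_sets reals exp.
From mathcomp Require Import all_order sequences.
From mathcomp Require Import ring lra.
From Stdlib Require Import Lia.
From mathcomp Require Import zify.
Import Order.TTheory GRing.Theory Num.Theory.
Local Open Scope ring_scope.
Local Open Scope complex_scope.
Local Open Scope ring_scope.

Lemma expR_le_inv (R : realType) (y : R) : y < 1 -> expR y <= (1 - y)^-1.
Proof.
move=> hy.
have h := expR_ge1Dx (- y).
have hp : 0 < 1 - y by lra.
rewrite expRN in h.
rewrite -[expR y]invrK lef_pV2 ?posrE ?invr_gt0 ?expR_gt0 //.
Qed.

Lemma expR_quad (R : realType) (y : R) : y <= 1/2 -> expR y <= 1 + y + y ^+ 2.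
Proof.
move=> hy.
case: (lerP 0 y) => y0.
- have -> : y = (y / 4) * 4%:R by field.
  rewrite expRM_natr.
  have h1 : expR (y/4) <= (1 - y/4)^-1 by apply: expR_le_inv; lra.
  have hp : 0 < 1 - y/4 by lra.
  apply: (le_trans (y := ((1 - y/4)^-1) ^+ 4)).
    by apply: lerXn2r => //; rewrite ?nnegrE ?expR_ge0 ?invr_ge0 ?ltW.
  rewrite exprVn.
  have hq : 0 < (1 - y/4)^+4 by rewrite exprn_gt0.
  rewrite -(ler_pM2r hq) mulVf ?gt_eqF //.
  have -> : (y / 4 * 4%:R) = y by field.
  nra.
- have hy1 : y < 1 by lra.
  apply: (le_trans (@expR_le_inv _ y hy1)).
  have hp : 0 < 1 - y by lra.
  rewrite -(ler_pM2r hp) mulVf ?gt_eqF //.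
  nra.
Qed.

Lemma mgf1 (R : realType) (q a l : R) : 0 < q -> q <= 1 -> 0 <= a -> 0 <= l ->
  l * (a * (q^-1 - 1)) <= 1/2 ->
  q * expR (l * (a * q^-1 - a)) + (1 - q) * expR (l * (a * 0 - a))
  <= expR (l^+2 * (a^+2 * (q^-1 - 1))).
Proof.
move=> q0 q1 a0 l0 h.
apply: le_trans (expR_ge1Dx _).
have e1 := @expR_quad R (l * (a * q^-1 - a)).
have e0 := @expR_quad R (l * (a * 0 - a)).
have h1 : l * (a * q^-1 - a) <= 1/2 by rewrite mulrBr mulr1 in h.
have h0 : l * (a * 0 - a) <= 1/2 by rewrite mulr0 sub0r mulrN; nra.
apply: (le_trans (y := q * (1 + l * (a * q^-1 - a) + (l * (a * q^-1 - a))^+2)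
   + (1 - q) * (1 + l * (a * 0 - a) + (l * (a * 0 - a))^+2))).
  apply: lerD; apply: ler_wpM2l; [lra | exact: e1 h1 | lra | exact: e0 h0].
rewrite le_eqVlt; apply/orP; left; apply/eqP. field. by rewrite gt_eqF.
Qed.

Lemma prob_tail (R : realType) (N m : nat -> nat) (r : nat) (a : nat -> R)
  (Z : outcome N r -> R) (t lam : R) :
 (forall j, (0 < j <= N r)%N -> 0 < @qidx R N m r j <= 1) ->
 (forall j, 0 <= a j) ->
 (forall w, Z w = \sum_(idx < N r) a idx.+1 * (if w idx then (@qidx R N m r idx.+1)^-1 else 0)) ->
 \sum_(idx < N r) a idx.+1 <= 1 ->
 0 <= lam ->
 (forall j, (0 < j <= N r)%N -> lam * (a j * ((@qidx R N m r j)^-1 - 1)) <= 1/2) ->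
 @Prob R N m r (fun w => 1 + t <= Z w) <=
   expR (- (lam * t) + lam^+2 * \sum_(idx < N r) a idx.+1 ^+ 2 * ((@qidx R N m r idx.+1)^-1 - 1)).
Proof.
move=> hq ha hZ hE hl hb.
set q := fun j => @qidx R N m r j.
set E := \sum_(idx < N r) a idx.+1.
set W := fun (idx : 'I_(N r)) (b : bool) => if b then q idx.+1 else 1 - q idx.+1.
set g := fun (idx : 'I_(N r)) (b : bool) =>
   expR (lam * (a idx.+1 * (if b then (q idx.+1)^-1 else 0) - a idx.+1)).
have hqi : forall idx : 'I_(N r), 0 < q idx.+1 <= 1.
  by move=> idx; apply: hq; rewrite /= ltn_ord.
have Wge0 : forall idx b, 0 <= W idx b.
  move=> idx [|]; rewrite /W; have := hqi idx; move=> /andP[h1 h2]; lra.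
have wge0 : forall w : outcome N r, 0 <= @weight R N m r w.
  by move=> w; rewrite /weight; apply: prodr_ge0 => idx _; exact: (Wge0 idx (w idx)).
have key : forall w : outcome N r,
    (if 1 + t <= Z w then @weight R N m r w else 0) <=
    @weight R N m r w * (expR (- (lam * t)) * \prod_idx g idx (w idx)).
  move=> w; case: ifP => hev; last by rewrite mulr_ge0 // mulr_ge0 ?expR_ge0 // prodr_ge0 // => *; exact: expR_ge0.
  rewrite -[X in X <= _]mulr1 ler_wpM2l //.
  rewrite -expR_sum -expRD -expR0 ler_expR /g.
  rewrite -mulr_sumr sumrB -/E -hZ.
  have : E <= 1 by [].
  nra.
rewrite /Prob big_mkcond /=.
apply: (le_trans (ler_sum _ (fun w _ => key w))).
have -> : \sum_(w : outcome N r) @weight R N m r w * (expR (- (lam * t)) * \prod_idx g idx (w idx))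
   = expR (- (lam * t)) * \sum_(w : {ffun 'I_(N r) -> bool}) \prod_idx (W idx (w idx) * g idx (w idx)).
  rewrite mulr_sumr; apply: eq_bigr => w _.
  by rewrite big_split /= mulrCA.
rewrite -(bigA_distr_bigA (fun idx b => W idx b * g idx b)) /= expRD ler_wpM2l ?expR_ge0 //.
rewrite mulr_sumr expR_sum.
apply: ler_prod => idx _; rewrite big_bool /=.
have /andP[q0 q1] := hqi idx.
apply/andP; split.
  by apply: addr_ge0; apply: mulr_ge0; rewrite ?expR_ge0 //; have := Wge0 idx; move=> H; [exact: (H true) | exact: (H false)].
rewrite /W /g /=.
have := @mgf1 R (q idx.+1) (a idx.+1) lam q0 q1 (ha _) hl.
apply.
by apply: hb; rewrite /= ltn_ord.
Qed.

Lemma level_ex (N : nat -> nat) r j : N 0%N = 0%N -> (0 < j)%N -> (j <= N r)%N ->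
  exists2 k, (1 <= k <= r)%N & (N k.-1 < j <= N k)%N.
Proof.
move=> N0 j0; elim: r => [|r IH] h; first by rewrite N0 in h; lia.
case: (leqP j (N r)) => hj.
  by have [k /andP[k1 kr] hk] := IH hj; exists k => //; rewrite k1 /=; lia.
by exists r.+1 => /=; lia.
Qed.

Lemma mono_le (N : nat -> nat) r : (forall k, (k < r)%N -> (N k <= N k.+1)%N) ->
  forall a b, (a <= b <= r)%N -> (N a <= N b)%N.
Proof.
move=> h a; elim => [|b IH] /andP[ab br].
  by have -> : a = 0%N by lia.
case: (ltngtP a b.+1) => hab; [| lia | by rewrite hab].
apply: leq_trans (h b br); apply: IH; lia.
Qed.

Lemma level_uniq (N : nat -> nat) r : (forall k, (k < r)%N -> (N k <= N k.+1)%N) ->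
  forall j k k', (1 <= k <= r)%N -> (1 <= k' <= r)%N ->
  (N k.-1 < j <= N k)%N -> (N k'.-1 < j <= N k')%N -> k = k'.
Proof.
move=> h j k k' hk hk' h1 h2.
case: (ltngtP k k') => // hlt.
- have := @mono_le N r h k k'.-1; lia.
- have := @mono_le N r h k' k.-1; lia.
Qed.

Lemma sum_level (R : realType) (N : nat -> nat) r (F : nat -> R) j k :
  (forall k, (k < r)%N -> (N k <= N k.+1)%N) ->
  (1 <= k <= r)%N -> (N k.-1 < j <= N k)%N ->
  \sum_(1 <= k' < r.+1 | (N k'.-1 < j <= N k')%N) F k' = F k.
Proof.
move=> h hk hj.
rewrite big_mkcond (bigD1_seq k) /= ?mem_index_iota ?iota_uniq //.
all: try lia.
rewrite hj /= big1_seq ?addr0 // => k' /andP[hk' hin].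
case: ifP => // hj'; exfalso; move/eqP: hk'; apply.
rewrite mem_index_iota in hin.
apply: (@level_uniq N r h j) => //; lia.
Qed.

Lemma delta_eval (N : nat -> nat) r (w : outcome N r) (idx : 'I_(N r)) :
  delta N r w idx.+1 = w idx.
Proof.
rewrite /delta /=; apply/existsP/idP => [[i /andP[/eqP hi wi]]|wi].
  by have -> : idx = i by apply: val_inj.
by exists idx; rewrite eqxx.
Qed.

Lemma qlev_bounds (R : realType) (N m : nat -> nat) k :
  (0 < m k <= N k - N k.-1)%N -> 0 < @qlev R N m k <= 1.
Proof.
move=> /andP[h1 h2]; rewrite /qlev; apply/andP; split.
  by rewrite divr_gt0 // ltr0n; lia.
have hp : (0 < (N k - N k.-1)%:R :> R) by rewrite ltr0n; lia.
by rewrite ler_pdivrMr // mul1r ler_nat.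
Qed.

Lemma Ddiag_eval (R : realType) (N m : nat -> nat) r (w : outcome N r) (idx : 'I_(N r)) k :
  (forall k, (k < r)%N -> (N k <= N k.+1)%N) ->
  (1 <= k <= r)%N -> (N k.-1 < idx.+1 <= N k)%N ->
  @Ddiag R N m r w idx.+1 = if w idx then (@qlev R N m k)^-1 else 0.
Proof.
move=> h hk hj; rewrite /Ddiag /inOmega.
rewrite (eq_bigr (fun k' => if (N k'.-1 < idx.+1 <= N k')%N then
   (if w idx then (@qlev R N m k')^-1 else 0) else 0)); last first.
  by move=> k' _; rewrite delta_eval; case: (N k'.-1 < _ <= _)%N; case: (w idx).
by rewrite -big_mkcond (@sum_level R N r (fun k' => if w idx then (@qlev R N m k')^-1 else 0) _ k h hk hj).
Qed.

Lemma qidx_eval (R : realType) (N m : nat -> nat) r j k :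
  (forall k, (k < r)%N -> (N k <= N k.+1)%N) ->
  (1 <= k <= r)%N -> (N k.-1 < j <= N k)%N ->
  @qidx R N m r j = @qlev R N m k.
Proof. by move=> h hk hj; rewrite /qidx (@sum_level R N r (@qlev R N m) j k h hk hj). Qed.
Lemma cabs_sq (R : realType) (z : R[i]) : cabs z ^+ 2 = complex.Re z ^+ 2 + complex.Im z ^+ 2.
Proof.
rewrite /cabs normc_def /=. rewrite sqr_sqrtr //. by rewrite addr_ge0 // sqr_ge0.
Qed.

Lemma cabs_ge0 (R : realType) (z : R[i]) : 0 <= cabs z.
Proof. by rewrite /cabs normc_def /= sqrtr_ge0. Qed.

Lemma cabsR (R : realType) (x : R) : 0 <= x -> cabs (x%:C) = x.
Proof.
move=> x0; rewrite /cabs normc_def /= expr0n /= addr0 sqrtr_sqr ger0_norm //.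
Qed.

Lemma conj_mul (R : realType) (z : R[i]) (c : R) :
  (z^*)%C * c%:C * z = (c * cabs z ^+ 2)%:C.
Proof.
rewrite cabs_sq; case: z => a b /=.
apply/eqP; rewrite eq_complex /=; apply/andP; split; apply/eqP; ring.
Qed.

Lemma UDU_eval (R : realType) (N m : nat -> nat) r (u : nat -> nat -> R[i]) (w : outcome N r) i :
  N 0%N = 0%N -> (forall k, (k < r)%N -> (N k <= N k.+1)%N) ->
  UDU_ii N m r u w i = \sum_(idx < N r) cabs (u idx.+1 i) ^+ 2 *
     (if w idx then (@qidx R N m r idx.+1)^-1 else 0).
Proof.
move=> N0 h; rewrite /UDU_ii.
under eq_bigr do rewrite conj_mul.
rewrite -raddf_sum cabsR; last first.
  apply: sumr_ge0 => j _; apply: mulr_ge0; last exact: sqr_ge0.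
  rewrite /Ddiag; apply: sumr_ge0 => k _; case: ifP => // _.
  by rewrite invr_ge0 /qlev divr_ge0.
rewrite big_add1 /= big_mkord; apply: eq_bigr => idx _.
have [k hk hj] := @level_ex N r idx.+1 N0 isT (ltn_ord idx).
by rewrite (@Ddiag_eval R N m r w idx k h hk hj) (@qidx_eval R N m r idx.+1 k h hk hj) mulrC.
Qed.

Lemma sum_single (R : zmodType) (F : nat -> R) i : (0 < i)%N ->
  \sum_(1 <= j < i.+1) (if j == i then F j else 0) = F i.
Proof.
move=> i0; rewrite big_nat_recr //= eqxx big1_seq ?add0r // => j /andP[_ hj].
by rewrite mem_index_iota in hj; rewrite ifF //; apply/negbTE; rewrite neq_ltn; case/andP: hj => _ ->.
Qed.

Lemma contr_col (R : realType) (u : nat -> nat -> R[i]) i p : contraction u -> (0 < i)%N ->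
  \sum_(1 <= j < p.+1) cabs (u j i) ^+ 2 <= 1.
Proof.
move=> hc i0; have := hc i p (fun j => if j == i then 1 else 0).
have e1 : forall jj, \sum_(1 <= j < i.+1) u jj j * (if j == i then 1 else 0) = u jj i.
  move=> jj; rewrite -(@sum_single _ (fun j => u jj j) i i0).
  by apply: eq_bigr => j _; case: ifP; rewrite ?mulr1 ?mulr0.
under eq_bigr do rewrite e1.
have -> : \sum_(1 <= j < i.+1) cabs (if j == i then (1 : R[i]) else 0) ^+ 2 = 1.
  rewrite -(@sum_single R (fun _ => 1) i i0).
  apply: eq_bigr => j _; case: ifP => _.
    by rewrite (@cabsR R 1) ?expr1n.
  by rewrite (@cabsR R 0) // expr0n.
done.
Qed.

Lemma entry_le1 (R : realType) (u : nat -> nat -> R[i]) i j : contraction u -> (0 < i)%N -> (0 < j)%N ->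
  cabs (u j i) ^+ 2 <= 1.
Proof.
move=> hc i0 j0; apply: le_trans (@contr_col R u i j hc i0).
rewrite big_nat_recr //= lerDr; apply: sumr_ge0 => *; exact: sqr_ge0.
Qed.

Lemma le_mu (R : realType) (A : nat -> nat -> R[i]) i j :
  (forall i j, (0 < i)%N -> (0 < j)%N -> cabs (A i j) ^+ 2 <= 1) ->
  (0 < i)%N -> (0 < j)%N -> cabs (A i j) ^+ 2 <= mu A.
Proof.
move=> hb i0 j0; rewrite /mu; apply: ub_le_sup; last by exists i, j.
by exists 1 => x [i' [j' [hi [hj ->]]]]; apply: hb.
Qed.

Lemma arith1 (R : realType) (t L B V x : R) : 0 < t -> 0 < L -> 0 <= B -> L * B <= t^+2/4 ->
  V <= B -> x = 2 * L / t -> - (x * t) + x ^+ 2 * V <= - L.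
Proof.
move=> t0 L0 B0 hLB hV ->.
have e : 2 * L / t * t = 2 * L by field; rewrite gt_eqF.
rewrite e.
have h1 : (2 * L / t) ^+ 2 * V <= (2 * L / t) ^+ 2 * B by rewrite ler_wpM2l ?sqr_ge0.
have h2 : (2 * L / t) ^+ 2 * B <= L.
  have -> : (2 * L / t) ^+ 2 * B = 4 * L * (L * B) / t ^+ 2 by field; rewrite gt_eqF.
  have tt : 0 < t ^+ 2 by rewrite exprn_gt0.
  rewrite ler_pdivrMr //. nra.
lra.
Qed.

Lemma arith2 (R : realType) (t L B y : R) : 0 < t < 1 -> 0 < L -> L * B <= t^+2/4 ->
  y <= B -> 2 * L / t * y <= 1/2.
Proof.
move=> /andP[t0 t1] L0 hLB hy.
have hp : 0 <= 2 * L / t by rewrite divr_ge0 // ltW // mulr_gt0.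
apply: le_trans (_ : 2 * L / t * B <= _); first by rewrite ler_wpM2l.
have -> : 2 * L / t * B = 2 * (L * B) / t by field; rewrite gt_eqF.
rewrite ler_pdivrMr //. nra.
Qed.

Lemma per_i (R : realType) (N m : nat -> nat) (r : nat) (a : nat -> R)
  (Z : outcome N r -> R) (t L B : R) :
 (forall j, (0 < j <= N r)%N -> 0 < @qidx R N m r j <= 1) ->
 (forall j, 0 <= a j) ->
 (forall w, Z w = \sum_(idx < N r) a idx.+1 * (if w idx then (@qidx R N m r idx.+1)^-1 else 0)) ->
 \sum_(idx < N r) a idx.+1 <= 1 ->
 0 < t < 1 -> 0 < L -> 0 <= B -> L * B <= t ^+ 2 / 4 ->
 (forall j, (0 < j <= N r)%N -> a j * ((@qidx R N m r j)^-1 - 1) <= B) ->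
 @Prob R N m r (fun w => 1 + t <= Z w) <= expR (- L).
Proof.
move=> hq ha hZ hE ht L0 B0 hLB hB.
have /andP[t0 t1] := ht.
have hl : 0 <= 2 * L / t by rewrite divr_ge0 // ltW // mulr_gt0.
apply: le_trans (@prob_tail R N m r a Z t (2 * L / t) hq ha hZ hE hl _) _.
  by move=> j hj; apply: (@arith2 R t L B _ ht L0 hLB); apply: hB.
rewrite ler_expR; apply: (@arith1 R t L B _ _ t0 L0 B0 hLB) => //.
apply: le_trans (_ : \sum_(idx < N r) a idx.+1 * B <= _).
  apply: ler_sum => idx _; rewrite expr2 -mulrA ler_wpM2l //.
  by apply: hB; rewrite /= ltn_ord.
by rewrite -mulr_suml -[X in _ <= X]mul1r ler_wpM2r.
Qed.

Lemma bnd_if (R : realType) (u : nat -> nat -> R[i]) (c : nat -> nat -> bool) :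
  contraction u ->
  forall i j, (0 < i)%N -> (0 < j)%N -> cabs (if c i j then u i j else 0) ^+ 2 <= 1.
Proof.
move=> hc i j i0 j0; case: ifP => _; first exact: entry_le1.
by rewrite (@cabsR R 0) // expr0n.
Qed.

Lemma a_le_sqrt (R : realType) (u A1 A2 : nat -> nat -> R[i]) j i :
  (forall i j, (0 < i)%N -> (0 < j)%N -> cabs (A1 i j) ^+ 2 <= 1) ->
  (forall i j, (0 < i)%N -> (0 < j)%N -> cabs (A2 i j) ^+ 2 <= 1) ->
  (0 < j)%N -> (0 < i)%N -> A1 j i = u j i -> A2 j i = u j i ->
  cabs (u j i) ^+ 2 <= Num.sqrt (mu A1 * mu A2).
Proof.
move=> h1 h2 j0 i0 e1 e2.
have l1 := @le_mu R A1 j i h1 j0 i0; have l2 := @le_mu R A2 j i h2 j0 i0.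
rewrite e1 in l1; rewrite e2 in l2.
have a0 : 0 <= cabs (u j i) ^+ 2 := sqr_ge0 _.
rewrite -[X in X <= _]ger0_norm // -sqrtr_sqr; apply: ler_wsqrtr.
by rewrite expr2; apply: ler_pM.
Qed.

Lemma B_bound (R : realType) (N m : nat -> nat) r (mu_l : nat -> R) (a : nat -> R) :
  N 0%N = 0%N -> (forall k, (k < r)%N -> (N k <= N k.+1)%N) ->
  (forall k, (1 <= k <= r)%N -> (0 < m k <= N k - N k.-1)%N) ->
  (forall j, 0 <= a j) ->
  (forall k j, (1 <= k <= r)%N -> (N k.-1 < j <= N k)%N -> a j <= mu_l k) ->
  forall j, (0 < j <= N r)%N -> a j * ((@qidx R N m r j)^-1 - 1) <=
    \big[Num.max/0]_(1 <= k < r.+1) (((N k - N k.-1)%:R / (m k)%:R - 1) * mu_l k).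
Proof.
move=> N0 hN hm ha hmu j /andP[j0 jr].
have [k hk hj] := @level_ex N r j N0 j0 jr.
rewrite (@qidx_eval R N m r j k hN hk hj).
apply: (@bigmax_sup_seq _ _ _ _ 0 k) => //; first by rewrite mem_index_iota; lia.
have /andP[q0 q1] := @qlev_bounds R N m k (hm k hk).
have hi : 0 <= (@qlev R N m k)^-1 - 1.
  by rewrite subr_ge0 invf_ge1.
rewrite /qlev invf_div in hi *.
by rewrite [a j * _]mulrC ler_wpM2l //; apply: hmu.
Qed.

Definition bnd {R : realType} (A : nat -> nat -> R[i]) :=
  forall i j, (0 < i)%N -> (0 < j)%N -> cabs (A i j) ^+ 2 <= 1.

Lemma bnd_Prows (R : realType) a b (A : nat -> nat -> R[i]) : bnd A -> bnd (Prows a b A).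
Proof.
move=> h i j i0 j0; rewrite /Prows; case: ifP => _; first exact: h.
by rewrite (@cabsR R 0) // expr0n.
Qed.

Lemma bnd_Pcols (R : realType) a b (A : nat -> nat -> R[i]) : bnd A -> bnd (Pcols a b A).
Proof.
move=> h i j i0 j0; rewrite /Pcols; case: ifP => _; first exact: h.
by rewrite (@cabsR R 0) // expr0n.
Qed.

Lemma bnd_Pcols_perp (R : realType) a (A : nat -> nat -> R[i]) : bnd A -> bnd (Pcols_perp a A).
Proof.
move=> h i j i0 j0; rewrite /Pcols_perp; case: ifP => _; first exact: h.
by rewrite (@cabsR R 0) // expr0n.
Qed.

Lemma bnd_u (R : realType) (u : nat -> nat -> R[i]) : contraction u -> bnd u.
Proof. by move=> hc i j i0 j0; apply: entry_le1. Qed.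

Lemma prob_union (R : realType) (N m : nat -> nat) r (E : pred (outcome N r))
  (Es : nat -> pred (outcome N r)) (s : seq nat) :
  uniq s -> (forall w, 0 <= @weight R N m r w) ->
  (forall w, E w -> exists2 i, i \in s & Es i w) ->
  @Prob R N m r E <= \sum_(i <- s) @Prob R N m r (Es i).
Proof.
move=> us wge hE; rewrite /Prob big_mkcond /=.
under [X in _ <= X]eq_bigr do rewrite big_mkcond /=.
rewrite exchange_big /=; apply: ler_sum => w _.
case: ifP => ew; last by apply: sumr_ge0 => i _; case: ifP.
have [i iis ei] := hE w ew.
rewrite (bigD1_seq i) //= ei lerDl; apply: sumr_ge0 => j _; case: ifP => //.
Qed.
Theorem proposition7p13 (R : realType) (u : nat -> nat -> R[i])
    (r : nat) (N M m s : nat -> nat) (Delta : nat -> seq nat) (Mb : nat) :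
  contraction u ->
  (0 < r)%N -> N 0%N = 0%N -> M 0%N = 0%N ->
  (1 <= N 1)%N ->
  (forall k, (1 <= k < r)%N -> (N k < N k.+1)%N) ->
  (forall k, (1 <= k < r)%N -> (M k < M k.+1)%N) ->
  (forall k, (1 <= k <= r)%N -> (0 < m k <= N k - N k.-1)%N) ->
  (forall k, (1 <= k <= r)%N ->
     [/\ uniq (Delta k), size (Delta k) = s k
       & all (fun j => (M k.-1 < j <= M k)%N) (Delta k)]) ->
  (M r <= Mb)%N ->
  forall t gamma : R, 0 < t < 1 -> 0 < gamma < 1 ->
  let inDelta j := has (fun k => j \in Delta k) (iota 1 r) in
  let bound (mu_l : nat -> R) :=
    ln (2 * Mb%:R / gamma)
    * \big[Num.max/0]_(1 <= k < r.+1)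
        (((N k - N k.-1)%:R / (m k)%:R - 1) * mu_l k) in
  ((forall l, ((Mb == M r) && (1 <= l <= r))%N || ((M r < Mb) && (1 <= l < r))%N ->
      bound (fun k => mu_NM N M u k l) <= t ^+ 2 / 4) ->
   ((M r < Mb)%N -> bound (fun k => mu_NM_inf N M r u k) <= t ^+ 2 / 4) ->
   @Prob R N m r (fun w => 1 + t <=
        \big[Num.max/0]_(1 <= i < Mb.+1 | ~~ inDelta i) UDU_ii N m r u w i)
     <= gamma)
  /\
  ((forall k, (1 <= k <= r)%N -> m k = (N k - N k.-1)%N) ->
   forall i, (0 < i)%N -> @Prob R N m r (fun w => 1 + t <= UDU_ii N m r u w i) = 0).
Proof.
move=> hc r0 N0 M0 N1 hNs hMs hm hD hMb t gamma ht hg inDelta bound.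
have hN : forall k, (k < r)%N -> (N k <= N k.+1)%N.
  move=> k kr; case: k kr => [|k] kr; first by rewrite N0.
  by apply: ltnW; apply: hNs; lia.
have hM : forall k, (k < r)%N -> (M k <= M k.+1)%N.
  move=> k kr; case: k kr => [|k] kr; first by rewrite M0.
  by apply: ltnW; apply: hMs; lia.
have hq : forall j, (0 < j <= N r)%N -> 0 < @qidx R N m r j <= 1.
  move=> j /andP[j0 jr]; have [k hk hj] := @level_ex N r j N0 j0 jr.
  rewrite (@qidx_eval R N m r j k hN hk hj); exact: (@qlev_bounds R N m k (hm k hk)).
have /andP[t0 t1] := ht; have /andP[g0 g1] := hg.
have hE : forall i, (0 < i)%N -> \sum_(idx < N r) cabs (u idx.+1 i) ^+ 2 <= 1.
  by move=> i i0; have := @contr_col R u i (N r) hc i0; rewrite big_add1 /= big_mkord.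
have hZ := fun i w => @UDU_eval R N m r u w i N0 hN.
have ha : forall i j, 0 <= cabs (u j i) ^+ 2 by move=> *; exact: sqr_ge0.
have wge : forall w, 0 <= @weight R N m r w.
  move=> w; rewrite /weight; apply: prodr_ge0 => idx _.
  have /andP[q0 q1] := hq idx.+1 (ltn_ord idx).
  by case: (w idx) => //; [exact: ltW | rewrite subr_ge0].
have bu := @bnd_u R u hc.
split.
- move=> hyp1 hyp2.
  rewrite /bound in hyp1 hyp2.
  case: (posnP Mb) => [Mb0 | Mbpos].
    rewrite /Prob big1; first exact: ltW.
    move=> w /=; rewrite Mb0 big_geq // => h; exfalso.
    have : 0 < 1 + t by rewrite addr_gt0.
    by rewrite ltNge h.
  set L := ln (2 * Mb%:R / gamma).
  have hMbR : 1 <= (Mb%:R : R) by rewrite ler1n.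
  have hx : 1 < 2 * Mb%:R / gamma.
    by rewrite ltr_pdivlMr // mul1r; lra.
  have L0 : 0 < L by apply: ln_gt0.
  have eL : expR (- L) = gamma / (2 * Mb%:R).
    have hpos : 0 < 2 * Mb%:R / gamma by lra.
    by rewrite expRN /L lnK ?posrE // invf_div.
  have per : forall i, (0 < i <= Mb)%N ->
      @Prob R N m r (fun w => 1 + t <= UDU_ii N m r u w i) <= expR (- L).
    move=> i /andP[i0 iMb].
    suff [B [B0 [hLB hB]]] : exists B, 0 <= B /\ L * B <= t ^+ 2 / 4 /\
        (forall j, (0 < j <= N r)%N -> cabs (u j i) ^+ 2 * ((@qidx R N m r j)^-1 - 1) <= B).
      exact: (@per_i R N m r (fun j => cabs (u j i) ^+ 2) _ t L B hq (ha i) (hZ i) (hE i i0) ht L0 B0 hLB hB).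
    have inf_case : (M r < Mb)%N -> (M r.-1 < i)%N -> exists B, 0 <= B /\ L * B <= t ^+ 2 / 4 /\
        (forall j, (0 < j <= N r)%N -> cabs (u j i) ^+ 2 * ((@qidx R N m r j)^-1 - 1) <= B).
      move=> hlt hi.
      exists (\big[Num.max/0]_(1 <= k < r.+1) (((N k - N k.-1)%:R / (m k)%:R - 1) * mu_NM_inf N M r u k)).
      split; first exact: bigmax_ge_id.
      split; first exact: hyp2.
      apply: (@B_bound R N m r _ _ N0 hN hm (ha i)) => k j hk hj.
      rewrite /mu_NM_inf; apply: (@a_le_sqrt R u) => //.
      - exact: (@bnd_Pcols_perp R _ _ (@bnd_Prows R _ _ _ bu)).
      - exact: (@bnd_Prows R _ _ _ bu).
      - lia.
      - by rewrite /Pcols_perp /Prows hi hj.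
      - by rewrite /Prows hj.
    case: (leqP i (M r)) => hiM; last first.
      apply: inf_case; first lia.
      have := @mono_le M r hM r.-1 r; lia.
    have [l hl hil] := @level_ex M r i M0 i0 hiM.
    case: (boolP ((Mb == M r) || (l < r)%N)) => hcase; last first.
      apply: inf_case; first lia.
      have -> : r = l by lia.
      lia.
    exists (\big[Num.max/0]_(1 <= k < r.+1) (((N k - N k.-1)%:R / (m k)%:R - 1) * mu_NM N M u k l)).
    split; first exact: bigmax_ge_id.
    split; first by apply: hyp1; lia.
    apply: (@B_bound R N m r _ _ N0 hN hm (ha i)) => k j hk hj.
    rewrite /mu_NM; apply: (@a_le_sqrt R u) => //.
    - exact: (@bnd_Pcols R _ _ _ (@bnd_Prows R _ _ _ bu)).
    - exact: (@bnd_Prows R _ _ _ bu).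
    - lia.
    - by rewrite /Pcols /Prows hil hj.
    - by rewrite /Prows hj.
  apply: le_trans (@prob_union R N m r _ (fun i w => 1 + t <= UDU_ii N m r u w i)
     (index_iota 1 Mb.+1) (iota_uniq _ _) wge _) _.
    move=> w /= hw.
    case: (boolP (has (fun i => 1 + t <= UDU_ii N m r u w i) (index_iota 1 Mb.+1))).
      by move/hasP.
    move/hasPn => hn; exfalso; move: hw; apply/negP; rewrite -ltNge.
    rewrite big_seq_cond; apply: bigmax_lt; first lra.
    by move=> i /andP[hi _]; rewrite ltNge; apply: hn.
  rewrite big_seq; apply: le_trans (_ : \sum_(i <- index_iota 1 Mb.+1 | i \in index_iota 1 Mb.+1) expR (- L) <= _).
    by apply: ler_sum => i; rewrite mem_index_iota => hi; apply: per; lia.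
  rewrite -big_seq sumr_const_nat eL subn1 /=.
  have hne : (Mb%:R : R) != 0 by rewrite pnatr_eq0 -lt0n.
  have -> : gamma / (2 * Mb%:R) *+ Mb = gamma / 2.
    rewrite -mulr_natr.
    by rewrite invfM -!mulrA mulVf ?mulr1.
  lra.
- move=> hmq i i0.
  have q1 : forall j, (0 < j <= N r)%N -> @qidx R N m r j = 1.
    move=> j /andP[j0 jr]; have [k hk hj] := @level_ex N r j N0 j0 jr.
    rewrite (@qidx_eval R N m r j k hN hk hj) /qlev hmq // divff // pnatr_eq0.
    by have := hm k hk; lia.
  rewrite /Prob big1 // => w /= hev.
  case: (boolP [forall idx, w idx]) => hall.
    exfalso; move: hev; rewrite hZ.
    have -> : \sum_(idx < N r) cabs (u idx.+1 i) ^+ 2 *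
        (if w idx then (@qidx R N m r idx.+1)^-1 else 0) =
        \sum_(idx < N r) cabs (u idx.+1 i) ^+ 2.
      apply: eq_bigr => idx _.
      by rewrite (forallP hall idx) q1 ?invr1 ?mulr1 // ltn_ord.
    have := hE i i0; lra.
  move/forallPn: hall => [idx hidx]; rewrite /weight (bigD1 idx) //=.
  by rewrite (negbTE hidx) q1 ?ltn_ord // subrr mul0r.
Qed.
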